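(* Let $R$ be an algebra over a field $\mathbb{F}$ with more than two elements. Then $R$ is of right invariant module type if and only if every indecomposable right $R$-module is automorphism-invariant.
   Context: Algebras are associative with identity; modules are unital right modules. $E(M)$ denotes the injective hull of $M$. A module $M$ is quasi-injective if every homomorphism from a submodule of $M$ to $M$ extends to an endomorphism of $M$. A module $M$ is automorphism-invariant if $\sigma(M)\subseteq M$ for every automorphism $\sigma$ of $E(M)$. A ring $R$ is of right invariant module type if every indecomposable right $R$-module is quasi-injective. *)

(* Defs.v *)
From HB Require Import structures.
From mathcomp Require Import all_boot all_order all_algebra.
Set Implicit Arguments. Unset Strict Implicit. Unset Printing Implicit Defensive.
Import GRing.Theory.
Local Open Scope ring_scope.

(* Convention: a unital right R-module is a left module over the converse
   ring R^c; for m : M and r : R, the right action m.r is (r : R^c) *: m. *)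
Notation rmodType R := (lmodType (R^c)%type).

Section ModuleNotions.
Variable R : pzRingType.

Definition ract (M : rmodType R) (m : M) (r : R) : M := (r : R^c) *: m.

Definition is_submodule (M : rmodType R) (S : pred M) : Prop :=
  [/\ 0 \in S, (forall x y, x \in S -> y \in S -> x + y \in S)
    & (forall x r, x \in S -> ract x r \in S)].

Definition hom_on (M N : rmodType R) (S : pred M) (f : M -> N) : Prop :=
  (forall x y, x \in S -> y \in S -> f (x + y) = f x + f y) /\
  (forall x r, x \in S -> f (ract x r) = ract (f x) r).

Definition quasi_injective (M : rmodType R) : Prop :=
  forall (S : pred M) (f : M -> M), is_submodule S -> hom_on S f ->
  exists g : {linear M -> M}, forall x, x \in S -> g x = f x.

Definition injective_module (E : rmodType R) : Prop :=
  forall (A B : rmodType R) (f : {linear A -> B}) (g : {linear A -> E}),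
  injective f -> exists h : {linear B -> E}, forall a, h (f a) = g a.

Definition essential_mono (M E : rmodType R) (i : {linear M -> E}) : Prop :=
  injective i /\
  forall S : pred E, is_submodule S -> (exists2 x, x \in S & x != 0) ->
    exists m, i m \in S /\ i m != 0.

Definition injective_hull (M E : rmodType R) (i : {linear M -> E}) : Prop :=
  injective_module E /\ essential_mono i.

Definition automorphism_invariant (M : rmodType R) : Prop :=
  forall (E : rmodType R) (i : {linear M -> E}), injective_hull i ->
  forall sigma : {linear E -> E}, bijective sigma ->
  forall m : M, exists m' : M, sigma (i m) = i m'.

Definition indecomposable (M : rmodType R) : Prop :=
  (exists x : M, x != 0) /\
  forall A B : pred M, is_submodule A -> is_submodule B ->
    (forall x, x \in A -> x \in B -> x = 0) ->
    (forall x, exists a b, [/\ a \in A, b \in B & x = a + b]) ->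
    (forall a, a \in A -> a = 0) \/ (forall b, b \in B -> b = 0).

Definition right_invariant_module_type : Prop :=
  forall M : rmodType R, indecomposable M -> quasi_injective M.

End ModuleNotions.

(* Main.v *)
Require Import Defs.
From HB Require Import structures.
From mathcomp Require Import all_boot all_order all_algebra.
From mathcomp Require Import boolp classical_sets.
Set Implicit Arguments. Unset Strict Implicit. Unset Printing Implicit Defensive.
Import GRing.Theory.
Local Open Scope classical_set_scope.
Local Open Scope ring_scope.

Section Basic.
Variables (R : pzRingType).

Lemma ractDl (M : rmodType R) (x y : M) r : ract (x + y) r = ract x r + ract y r.
Proof. by rewrite /ract scalerDr. Qed.
Lemma ractDr (M : rmodType R) (x : M) r s : ract x (r + s) = ract x r + ract x s.
Proof. by rewrite /ract scalerDl. Qed.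
Lemma ractA (M : rmodType R) (x : M) r s : ract (ract x r) s = ract x (r * s).
Proof. by rewrite /ract scalerA. Qed.
Lemma ract1 (M : rmodType R) (x : M) : ract x 1 = x.
Proof. by rewrite /ract scale1r. Qed.
Lemma ractr0 (M : rmodType R) (x : M) : ract x 0 = 0.
Proof. by rewrite /ract scale0r. Qed.
Lemma ract0 (M : rmodType R) r : ract (0 : M) r = 0.
Proof. by rewrite /ract scaler0. Qed.
Lemma ractN1 (M : rmodType R) (x : M) : ract x (-1) = - x.
Proof. by rewrite /ract scaleN1r. Qed.
Lemma ractN (M : rmodType R) (x : M) r : ract (- x) r = - ract x r.
Proof. by rewrite /ract scalerN. Qed.
Lemma ractB (M : rmodType R) (x y : M) r : ract (x - y) r = ract x r - ract y r.
Proof. by rewrite /ract scalerBr. Qed.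
Lemma ractBr (M : rmodType R) (x : M) r s : ract x (r - s) = ract x r - ract x s.
Proof. by rewrite /ract scalerBl. Qed.

Lemma linZ (U V : rmodType R) (f : {linear U -> V}) x r : f (ract x r) = ract (f x) r.
Proof. by rewrite /ract linearZ. Qed.

Definition mklin (U V : rmodType R) (f : U -> V)
  (H : forall (a : R^c) u v, f (a *: u + v) = a *: f u + f v) : {linear U -> V} :=
  HB.pack f (GRing.isLinear.Build _ _ _ _ f H).

Lemma mklin_ok (U V : rmodType R) (f : U -> V) :
  (forall x y, f (x + y) = f x + f y) -> (forall x r, f (ract x r) = ract (f x) r) ->
  forall (a : R^c) u v, f (a *: u + v) = a *: f u + f v.
Proof. by move=> HD HZ a u v; rewrite HD; congr (_ + _); apply: HZ. Qed.

Record subm (M : rmodType R) (S : pred M) := Subm { sv : M; svP : sv \in S }.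

Lemma subm_ext M S (x y : @subm M S) : sv x = sv y -> x = y.
Proof.
case: x y => x Hx [y Hy] /= exy; subst y; congr Subm; exact: bool_irrelevance.
Qed.

Definition subT (M : rmodType R) (S : pred M) (HS : is_submodule S) := subm S.
End Basic.

HB.instance Definition _ (R : pzRingType) (M : rmodType R) (S : pred M) (HS : is_submodule S) :=
  gen_eqMixin (subT HS).
HB.instance Definition _ (R : pzRingType) (M : rmodType R) (S : pred M) (HS : is_submodule S) :=
  gen_choiceMixin (subT HS).

Section SubInst.
Variables (R : pzRingType) (M : rmodType R) (S : pred M) (HS : is_submodule S).

Lemma HS0 : (0 : M) \in S. Proof. by case: HS. Qed.
Lemma HSD x y : x \in S -> y \in S -> x + y \in S. Proof. by case: HS => _ H _; apply: H. Qed.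
Lemma HSZ x r : x \in S -> ract x r \in S. Proof. by case: HS => _ _ H; apply: H. Qed.
Lemma HSN x : x \in S -> - x \in S. Proof. by move=> Hx; rewrite -ractN1; apply: HSZ. Qed.

Definition sz : subT HS := Subm HS0.
Definition sadd (x y : subT HS) : subT HS := Subm (HSD (svP x) (svP y)).
Definition sopp (x : subT HS) : subT HS := Subm (HSN (svP x)).
Definition sscale (r : R^c) (x : subT HS) : subT HS := Subm (HSZ r (svP x)).

Lemma saddA : associative sadd.
Proof. by move=> x y z; apply: subm_ext; rewrite /= addrA. Qed.
Lemma saddC : commutative sadd.
Proof. by move=> x y; apply: subm_ext; rewrite /= addrC. Qed.
Lemma sadd0 : left_id sz sadd.
Proof. by move=> x; apply: subm_ext; rewrite /= add0r. Qed.
Lemma saddN : left_inverse sz sopp sadd.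
Proof. by move=> x; apply: subm_ext; rewrite /= addNr. Qed.

HB.instance Definition _ := GRing.isZmodule.Build (subT HS) saddA saddC sadd0 saddN.

Lemma sscaleA a b v : sscale a (sscale b v) = sscale (a * b) v.
Proof. by apply: subm_ext; rewrite /sscale /= /ract scalerA. Qed.
Lemma sscale1 : left_id 1 sscale.
Proof. by move=> x; apply: subm_ext; rewrite /sscale /= /ract scale1r. Qed.
Lemma sscaleDr : right_distributive sscale +%R.
Proof. by move=> a x y; apply: subm_ext; rewrite /sscale /= /ract scalerDr. Qed.
Lemma sscaleDl v : {morph sscale^~ v: a b / a + b}.
Proof. by move=> a b; apply: subm_ext; rewrite /sscale /= /ract scalerDl. Qed.

HB.instance Definition _ := GRing.Zmodule_isLmodule.Build (R^c)%type (subT HS)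
   sscaleA sscale1 sscaleDr sscaleDl.

Definition sincl : {linear subT HS -> M} := @mklin _ (subT HS) M (@sv _ _ _)
  (mklin_ok (fun _ _ => erefl) (fun _ _ => erefl)).
Lemma sincl_inj : injective sincl. Proof. by move=> x y; apply: subm_ext. Qed.
End SubInst.

Lemma zorn_ne T (P : set (set T)) :
  (forall Fm : set (set T), Fm `<=` P -> total_on Fm subset ->
     (exists X, Fm X) -> P (\bigcup_(X in Fm) X)) ->
  (exists X, P X /\ exists t, X t) ->
  exists A, P A /\ forall B, A `<=` B -> P B -> B `<=` A.
Proof.
move=> HC [X0 [PX0 [t0 X0t0]]].
pose P' := fun X : set T => P X \/ X = set0.
have [|A [PA' Amax]] := @Zorn_bigcup T P'.
  move=> Fm FP tot.
  have [[X [FX [t Xt]]]|none] := pselect (exists X, Fm X /\ exists t, X t).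
    left.
    pose Fm' := fun Y => Fm Y /\ exists t, Y t.
    have -> : \bigcup_(Y in Fm) Y = \bigcup_(Y in Fm') Y.
      apply/seteqP; split => z [Y FY Yz]; last by exists Y => //; case: FY.
      by exists Y => //; split => //; exists z.
    apply: HC.
    - by move=> Y [FY [s Ys]]; case: (FP _ FY) => // Y0; rewrite Y0 in Ys.
    - by move=> Y Z [FY _] [FZ _]; apply: tot.
    - by exists X; split => //; exists t.
  right; apply/seteqP; split => z // [Y FY Yz]; exfalso; apply: none.
  by exists Y; split => //; exists z.
have PA : P A.
  case: PA' => // A0; exfalso; apply: (Amax X0); last by left.
  rewrite A0; split => // H; exact: (H t0 X0t0).
exists A; split => // B AB PB; apply: contrapT => nBA.
by apply: (Amax B) => //; left.
Qed.

Section Ext.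
Variables (F : fieldType) (R : algType F).

Lemma algD (k k' : F) : (k + k')%:A = k%:A + k'%:A :> R.
Proof. by rewrite scalerDl. Qed.
Lemma algM (k k' : F) : (k * k')%:A = k%:A * k'%:A :> R.
Proof. by rewrite -scalerAl mul1r scalerA. Qed.
Lemma alg_comm (k : F) (r : R) : k%:A * r = r * k%:A.
Proof. by rewrite mulr_algl mulr_algr. Qed.
Lemma alg0 : (0 : F)%:A = 0 :> R. Proof. by rewrite scale0r. Qed.
Lemma alg1 : (1 : F)%:A = 1 :> R. Proof. by rewrite scale1r. Qed.
Lemma algN1 : (-1 : F)%:A = -1 :> R. Proof. by rewrite scaleN1r. Qed.

Lemma ract_comm (M : rmodType R) (x : M) (k : F) r :
  ract (ract x r) k%:A = ract (ract x k%:A) r.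
Proof. by rewrite !ractA alg_comm. Qed.

Section G.
Variables (A B M : rmodType R) (f : {linear A -> B}) (finj : injective f) (g : A -> M)
  (gD : forall x y, g (x + y) = g x + g y)
  (gZ : forall x (k : F), g (ract x k%:A) = ract (g x) k%:A).

Definition good (G : set (B * M)) :=
  [/\ forall b m m', G (b, m) -> G (b, m') -> m = m',
      forall b m b' m', G (b, m) -> G (b', m') -> G (b + b', m + m'),
      forall b m (k : F), G (b, m) -> G (ract b k%:A, ract m k%:A)
    & forall a, G (f a, g a)].

Lemma good0 G : good G -> G (0, 0).
Proof.
case=> _ _ HZ HI; have := HZ _ _ 0 (HI 0).
by rewrite alg0 !ractr0.
Qed.

Lemma good_chain (Fm : set (set (B * M))) :
  Fm `<=` good -> total_on Fm subset -> (exists X, Fm X) ->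
  good (\bigcup_(X in Fm) X).
Proof.
move=> FP tot [X0 FX0]; split.
- move=> b m m' [X FX Xb] [Y FY Yb].
  have [XY|YX] := tot _ _ FX FY.
    by case: (FP _ FY) => Hf _ _ _; apply: (Hf b) => //; apply: XY.
  by case: (FP _ FX) => Hf _ _ _; apply: (Hf b) => //; apply: YX.
- move=> b m b' m' [X FX Xb] [Y FY Yb].
  have [XY|YX] := tot _ _ FX FY.
    by exists Y => //; case: (FP _ FY) => _ HD _ _; apply: HD => //; apply: XY.
  by exists X => //; case: (FP _ FX) => _ HD _ _; apply: HD => //; apply: YX.
- move=> b m k [X FX Xb]; exists X => //.
  by case: (FP _ FX) => _ _ HZ _; apply: HZ.
- move=> a; exists X0 => //; by case: (FP _ FX0).
Qed.

Lemma good_init : good (fun p => exists a, p = (f a, g a)).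
Proof.
split.
- move=> b m m' [a [-> ->]] [a' [e ->]]; by rewrite (finj e).
- move=> b m b' m' [a [-> ->]] [a' [-> ->]]; exists (a + a').
  by rewrite linearD gD.
- move=> b m k [a [-> ->]]; exists (ract a k%:A).
  by rewrite linZ gZ.
- by move=> a; exists a.
Qed.

Lemma good_total G : good G -> (forall H, G `<=` H -> good H -> H `<=` G) ->
  forall b, exists m, G (b, m).
Proof.
move=> gG Gmax b; apply: contrapT => nb.
have nb' : forall m, ~ G (b, m) by move=> m Gm; apply: nb; exists m.
pose H := fun p : B * M => exists d m (k : F), G (d, m) /\ p = (d + ract b k%:A, m).
case: (gG) => Hf HD HZ HI.
have GH : G `<=` H.
  by move=> [d m] Gdm; exists d, m, 0; split => //; rewrite alg0 ractr0 addr0.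
have Hb : H (b, 0).
  exists 0, 0, 1; split; first exact: good0.
  by rewrite alg1 ract1 add0r.
suff gH : good H by apply: (nb' 0); apply: (Gmax H GH gH).
split.
- move=> x m m' [d1 [m1 [k1 [G1 [e1 e1']]]]] [d2 [m2 [k2 [G2 [e2 e2']]]]].
  subst x m m'.
  have [ek|nek] := eqVneq k1 k2.
    subst k2; move/addIr: e2 => e; subst d2; exact: (Hf d1).
  exfalso; apply: (nb' (ract (m2 - m1) ((k1 - k2)^-1)%:A)).
  have Gd : G (d2 - d1, m2 - m1).
    apply: HD => //; have := HZ _ _ (-1) G1; by rewrite algN1 !ractN1.
  have := HZ _ _ ((k1 - k2)^-1) Gd.
  suff -> : ract (d2 - d1) ((k1 - k2)^-1)%:A = b by [].
  have -> : d2 - d1 = ract b (k1 - k2)%:A.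
    have -> : d2 = d1 + ract b k1%:A - ract b k2%:A by rewrite e2 addrK.
    by rewrite -[d1 + _ - _]addrA addrAC subrr add0r -ractBr scalerBl.
  by rewrite ractA -algM mulfV ?subr_eq0 // alg1 ract1.
- move=> x m x' m' [d1 [m1 [k1 [G1 [e1 e1']]]]] [d2 [m2 [k2 [G2 [e2 e2']]]]].
  subst x m x' m'.
  exists (d1 + d2), (m1 + m2), (k1 + k2); split; first exact: HD.
  by rewrite algD ractDr addrACA.
- move=> x m k [d1 [m1 [k1 [G1 [e1 e1']]]]]; subst x m.
  exists (ract d1 k%:A), (ract m1 k%:A), (k1 * k); split; first exact: HZ.
  by rewrite ractDl ractA -algM.
- by move=> a; apply: GH.
Qed.

Lemma ext_flin : exists G : B -> M,
  [/\ forall x y, G (x + y) = G x + G y,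
      forall x (k : F), G (ract x k%:A) = ract (G x) k%:A
    & forall a, G (f a) = g a].
Proof.
have [G [gG Gmax]] := @zorn_ne _ good good_chain
  (ex_intro _ _ (conj good_init (ex_intro _ _ (ex_intro _ 0 erefl)))).
have tot := good_total gG Gmax.
pose Gf b := projT1 (cid (tot b)).
have GfP b : G (b, Gf b) := projT2 (cid (tot b)).
case: gG => Hf HD HZ HI.
exists Gf; split.
- by move=> x y; apply: (Hf (x + y)) => //; apply: HD.
- by move=> x k; apply: (Hf (ract x k%:A)) => //; apply: HZ.
- by move=> a; apply: (Hf (f a)).
Qed.
End G.
End Ext.

Record Ity (F : fieldType) (R : algType F) (M : rmodType R) := MkI {
  phi : R -> M;
  phiD : forall r s, phi (r + s) = phi r + phi s;
  phiZ : forall (k : F) r, phi (k%:A * r) = ract (phi r) k%:A }.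

HB.instance Definition _ (F : fieldType) (R : algType F) (M : rmodType R) :=
  gen_eqMixin (Ity M).
HB.instance Definition _ (F : fieldType) (R : algType F) (M : rmodType R) :=
  gen_choiceMixin (Ity M).

Section IInst.
Variables (F : fieldType) (R : algType F) (M : rmodType R).

Lemma Ity_ext (x y : Ity M) : phi x =1 phi y -> x = y.
Proof.
case: x y => f fD fZ [g gD gZ] /= e.
have efg : f = g by apply: funext.
subst g; congr MkI; exact: Prop_irrelevance.
Qed.

Definition iz : Ity M := @MkI _ _ M (fun _ => 0) (fun _ _ => esym (addr0 0))
  (fun k r => esym (ract0 _ _)).

Definition iadd (x y : Ity M) : Ity M.
Proof.
refine (@MkI _ _ M (fun r => phi x r + phi y r) _ _).
- by move=> r s; rewrite !phiD addrACA.
- by move=> k r; rewrite !phiZ ractDl.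
Defined.

Definition iopp (x : Ity M) : Ity M.
Proof.
refine (@MkI _ _ M (fun r => - phi x r) _ _).
- by move=> r s; rewrite phiD opprD.
- by move=> k r; rewrite phiZ ractN.
Defined.

Definition iscale (s : R^c) (x : Ity M) : Ity M.
Proof.
refine (@MkI _ _ M (fun r => phi x ((s : R) * r)) _ _).
- by move=> r t; rewrite mulrDr phiD.
- move=> k r; rewrite -phiZ; congr (phi x _).
  by rewrite mulrA -alg_comm mulrA.
Defined.

Lemma iaddA : associative iadd.
Proof. by move=> x y z; apply: Ity_ext => r /=; rewrite addrA. Qed.
Lemma iaddC : commutative iadd.
Proof. by move=> x y; apply: Ity_ext => r /=; rewrite addrC. Qed.
Lemma iadd0 : left_id iz iadd.
Proof. by move=> x; apply: Ity_ext => r /=; rewrite add0r. Qed.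
Lemma iaddN : left_inverse iz iopp iadd.
Proof. by move=> x; apply: Ity_ext => r /=; rewrite addNr. Qed.

HB.instance Definition _ := GRing.isZmodule.Build (Ity M) iaddA iaddC iadd0 iaddN.

Lemma iscaleA a b v : iscale a (iscale b v) = iscale (a * b) v.
Proof. by apply: Ity_ext => r /=; rewrite mulrA. Qed.
Lemma iscale1 : left_id 1 iscale.
Proof. by move=> x; apply: Ity_ext => r /=; rewrite mul1r. Qed.
Lemma iscaleDr : right_distributive iscale +%R.
Proof. by move=> a x y; apply: Ity_ext => r /=. Qed.
Lemma iscaleDl v : {morph iscale^~ v: a b / a + b}.
Proof. by move=> a b; apply: Ity_ext => r /=; rewrite mulrDl phiD. Qed.

HB.instance Definition _ := GRing.Zmodule_isLmodule.Build (R^c)%type (Ity M)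
   iscaleA iscale1 iscaleDr iscaleDl.

Lemma phi_add (x y : Ity M) r : phi (x + y) r = phi x r + phi y r. Proof. by []. Qed.
Lemma phi_ract (x : Ity M) s r : phi (ract x s) r = phi x (s * r). Proof. by []. Qed.

Definition jfun (m : M) : Ity M.
Proof.
refine (@MkI _ _ M (fun r => ract m r) _ _).
- by move=> r s; rewrite ractDr.
- by move=> k r; rewrite ractA alg_comm.
Defined.

Lemma jD x y : jfun (x + y) = jfun x + jfun y.
Proof. by apply: Ity_ext => r /=; rewrite ractDl. Qed.
Lemma jZ x s : jfun (ract x s) = ract (jfun x) s.
Proof. by apply: Ity_ext => r; rewrite phi_ract /= ractA. Qed.

Definition jlin : {linear M -> Ity M} := @mklin _ M (Ity M) jfun (mklin_ok jD jZ).

Lemma jlin_inj : injective jlin.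
Proof. move=> x y e; have := congr1 (fun u => phi u 1) e; by rewrite /= !ract1. Qed.

Definition mkIG (B : rmodType R) (G : B -> M)
  (GD : forall x y, G (x + y) = G x + G y)
  (GZ : forall x (k : F), G (ract x k%:A) = ract (G x) k%:A) (b : B) : Ity M.
Proof.
refine (@MkI _ _ M (fun r => G (ract b r)) _ _).
- by move=> r s; rewrite ractDr GD.
- by move=> k r; rewrite -GZ ract_comm ractA.
Defined.

Lemma Ity_injective : injective_module (Ity M).
Proof.
move=> A B f g finj.
pose g' (a : A) := phi (g a) 1.
have g'D x y : g' (x + y) = g' x + g' y by rewrite /g' linearD.
have g'Z x (k : F) : g' (ract x k%:A) = ract (g' x) k%:A.
  by rewrite /g' linZ phi_ract mulr1 -phiZ mulr1.
have [G [GD GZ Gf]] := ext_flin finj g'D g'Z.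
  pose hfun := @mkIG B G GD GZ.
have hD x y : hfun (x + y) = hfun x + hfun y.
  by apply: Ity_ext => r /=; rewrite ractDl GD.
have hZ x s : hfun (ract x s) = ract (hfun x) s.
  by apply: Ity_ext => r; rewrite phi_ract /= ractA.
exists (@mklin _ B (Ity M) hfun (mklin_ok hD hZ)) => a.
apply: Ity_ext => r /=.
by rewrite -linZ Gf /g' linZ phi_ract mulr1.
Qed.
End IInst.

Section Core.
Variable (R : pzRingType).

Definition psub (M : rmodType R) (X : set M) :=
  [/\ X 0, forall x y, X x -> X y -> X (x + y) & forall x r, X x -> X (ract x r)].
Definition toP (M : rmodType R) (X : set M) : pred M := fun x => `[< X x >].

Lemma inP (M : rmodType R) (X : set M) x : x \in toP X <-> X x.
Proof. by rewrite unfold_in /toP; split => [/asboolP|/asboolP]. Qed.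

Lemma toP_sub (M : rmodType R) (X : set M) : psub X -> is_submodule (toP X).
Proof.
case=> H0 HD HZ; split.
- exact/inP.
- by move=> x y /inP Hx /inP Hy; apply/inP; apply: HD.
- by move=> x r /inP Hx; apply/inP; apply: HZ.
Qed.

Lemma psubN (M : rmodType R) (X : set M) x : psub X -> X x -> X (- x).
Proof. by case=> _ _ HZ Hx; rewrite -ractN1; apply: HZ. Qed.
Lemma psubB (M : rmodType R) (X : set M) x y : psub X -> X x -> X y -> X (x - y).
Proof. by move=> HX Hx Hy; case: (HX) => _ HD _; apply: HD => //; apply: psubN. Qed.

Definition ess (M : rmodType R) (X H : set M) :=
  forall y, H y -> y != 0 -> exists r, X (ract y r) /\ ract y r != 0.

Lemma psub_chain (M : rmodType R) (Fm : set (set M)) :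
  Fm `<=` @psub M -> total_on Fm subset -> (exists X, Fm X) -> psub (\bigcup_(X in Fm) X).
Proof.
move=> FP tot [X0 FX0]; split.
- by exists X0 => //; case: (FP _ FX0).
- move=> x y [X FX Xx] [Y FY Yy].
  have [XY|YX] := tot _ _ FX FY.
    by exists Y => //; case: (FP _ FY) => _ HD _; apply: HD => //; apply: XY.
  by exists X => //; case: (FP _ FX) => _ HD _; apply: HD => //; apply: YX.
- by move=> x r [X FX Xx]; exists X => //; case: (FP _ FX) => _ _ HZ; apply: HZ.
Qed.

Definition linS (U V : rmodType R) (f : U -> V) :=
  (forall x y, f (x + y) = f x + f y) /\ (forall x r, f (ract x r) = ract (f x) r).

Definition mkl (U V : rmodType R) (f : U -> V) (H : linS f) : {linear U -> V} :=
  mklin (mklin_ok H.1 H.2).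

Lemma core (I : rmodType R) (Iinj : injective_module I) (X : set I) : psub X ->
  exists (H : set I) (p : {linear I -> I}),
  [/\ psub H, X `<=` H, ess X H, forall x, H (p x) & forall h, H h -> p h = h].
Proof.
move=> pX.
pose P := fun H : set I => [/\ psub H, X `<=` H & ess X H].
have [H [[pH XH eH] Hmax]] : exists H, P H /\ forall B, H `<=` B -> P B -> B `<=` H.
  apply: zorn_ne.
    move=> Fm FP tot [X0 FX0]; split.
    - by apply: psub_chain; [move=> Y /FP [] | | exists X0].
    - by move=> x Xx; exists X0 => //; case: (FP _ FX0) => _ XH _; apply: XH.
    - move=> y [Y FY Yy] y0; case: (FP _ FY) => _ _ eY.
      have [r [Xr r0]] := eY y Yy y0; by exists r.
  exists X; split; last by exists 0; case: pX.
  split => //; move=> y Xy y0; exists 1; by rewrite ract1.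
pose Q := fun K : set I => psub K /\ forall z, K z -> H z -> z = 0.
have [K [[pK KH] Kmax]] : exists K, Q K /\ forall B, K `<=` B -> Q B -> B `<=` K.
  apply: zorn_ne.
    move=> Fm FP tot [X0 FX0]; split.
    - by apply: psub_chain; [move=> Y /FP [] | | exists X0].
    - by move=> z [Y FY Yz] Hz; case: (FP _ FY) => _ HY; apply: HY.
  exists [set 0]; split; last by exists 0.
  split; last by move=> z ->.
  split => //; first by move=> x y -> ->; rewrite addr0.
  by move=> x r ->; rewrite ract0.
have uniq h1 k1 h2 k2 : H h1 -> K k1 -> H h2 -> K k2 -> h1 + k1 = h2 + k2 -> h1 = h2.
  move=> H1 K1 H2 K2 e.
  have e' : h1 - h2 = k2 - k1.
    by apply: (addIr (h2 + k1)); rewrite addrA addrNK [h2 + k1]addrC addrA addrNK e addrC.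
  have z0 : h1 - h2 = 0 by apply: KH; [rewrite e'; exact: (psubB pK K2 K1) | exact: (psubB pH H1 H2)].
  by apply/eqP; rewrite -subr_eq0 z0.
pose S := fun z : I => exists h k, [/\ H h, K k & z = h + k].
have pS : psub S.
  split.
  - by exists 0, 0; split; rewrite ?addr0 //; [case: pH | case: pK].
  - move=> x y [h1 [k1 [H1 K1 ->]]] [h2 [k2 [H2 K2 ->]]].
    exists (h1 + h2), (k1 + k2); split; last by rewrite addrACA.
      by case: pH => _ HD _; apply: HD.
    by case: pK => _ HD _; apply: HD.
  - move=> x r [h [k [Hh Kk ->]]]; exists (ract h r), (ract k r); split.
    + by case: pH => _ _ HZ; apply: HZ.
    + by case: pK => _ _ HZ; apply: HZ.
    + by rewrite ractDl.
pose hp z := match pselect (S z) with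
  | left e => projT1 (cid e) | right _ => 0 end.
have hpE h k : H h -> K k -> hp (h + k) = h.
  move=> Hh Kk; rewrite /hp; case: pselect => [e|]; last first.
    by move=> nS; exfalso; apply: nS; exists h, k.
  case: (cid e) => h' /= [k' [Hh' Kk' e']].
  by apply: (uniq h' k' h k) => //.
have hpS z : S z -> exists h k, [/\ H h, K k, z = h + k & hp z = h].
  by move=> [h [k [Hh Kk ->]]]; exists h, k; split => //; apply: hpE.
have Ssub := toP_sub pS.
pose pi (s : subT Ssub) := hp (sv s).
have piL : linS pi.
  split.
  - move=> s t; rewrite /pi /=.
    have /inP := svP s; move=> /hpS [h1 [k1 [H1 K1 e1 ->]]].
    have /inP := svP t; move=> /hpS [h2 [k2 [H2 K2 e2 ->]]].
    rewrite e1 e2 addrACA hpE //.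
      by case: pH => _ HD _; apply: HD.
    by case: pK => _ HD _; apply: HD.
  - move=> s r; rewrite /pi /=.
    have /inP := svP s; move=> /hpS [h1 [k1 [H1 K1 e1 ->]]].
    rewrite /ract /= -/(ract (sv s) r) e1 ractDl hpE //.
      by case: pH => _ _ HZ; apply: HZ.
    by case: pK => _ _ HZ; apply: HZ.
have [p pE] := Iinj _ _ (sincl Ssub) (mkl piL) (@sincl_inj _ _ _ Ssub).
have pH' h : H h -> p h = h.
  move=> Hh; have Sh : h \in toP S by apply/inP; exists h, 0; split; rewrite ?addr0 //; case: pK.
  have := pE (Subm Sh); rewrite /= /pi /= => ->.
  by rewrite -[h]addr0 hpE ?addr0 //; case: pK.
have pK' k : K k -> p k = 0.
  move=> Kk; have Sk : k \in toP S by apply/inP; exists 0, k; split; rewrite ?add0r //; case: pH.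
  have := pE (Subm Sk); rewrite /= /pi /= => ->.
  by rewrite -[k]add0r hpE //; case: pH.
pose Im := fun y => exists x, y = p x.
have pIm : psub Im.
  split.
  - by exists 0; rewrite linear0.
  - by move=> x y [x' ->] [y' ->]; exists (x' + y'); rewrite linearD.
  - by move=> x r [x' ->]; exists (ract x' r); rewrite linZ.
have HIm : H `<=` Im by move=> h Hh; exists h; rewrite pH'.
have eIm : ess X Im.
  move=> y [x ->] y0.
  pose K' := fun z => exists k r, K k /\ z = k + ract x r.
  have pK2 : psub K'.
    split.
    - by exists 0, 0; split; [case: pK | rewrite ractr0 addr0].
    - move=> a b [k1 [r1 [K1 ->]]] [k2 [r2 [K2 ->]]].
      exists (k1 + k2), (r1 + r2); split; last by rewrite ractDr addrACA.
      by case: pK => _ HD _; apply: HD.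
    - move=> a s [k1 [r1 [K1 ->]]]; exists (ract k1 s), (r1 * s); split.
        by case: pK => _ _ HZ; apply: HZ.
      by rewrite ractDl ractA.
  have KK' : K `<=` K' by move=> k Kk; exists k, 0; split; rewrite ?ractr0 ?addr0.
  have nQ : ~ Q K'.
    move=> QK'; have Kx : K x.
      by apply: (Kmax K' KK' QK'); exists 0, 1; split; rewrite ?ract1 ?add0r //; case: pK.
    by move: y0; rewrite pK' ?eqxx.
  have [z [K'z [Hz z0]]] : exists z, K' z /\ H z /\ z != 0.
    apply: contrapT => nz; apply: nQ; split => // z K'z Hz.
    apply/eqP; apply: contrapT => z0; apply: nz; exists z; split => //; split => //.
    exact/negP.
  case: K'z => k [r [Kk ez]].
  have pz : p z = ract (p x) r by rewrite ez linearD pK' // add0r linZ.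
  rewrite pH' // in pz.
  have [r' [Xr' r'0]] := eH z Hz z0.
  by exists (r * r'); rewrite -ractA -pz.
have ImH : Im `<=` H by apply: Hmax => //; split => //; apply: subset_trans XH HIm.
exists H, p; split => //.
by move=> x; apply: ImH; exists x.
Qed.
End Core.

Section Hull.
Variables (F : fieldType) (R : algType F).

Lemma hull_exists (M : rmodType R) :
  exists (E : rmodType R) (i : {linear M -> E}), injective_hull i.
Proof.
pose X := fun y : Ity M => exists m, y = jlin M m.
have pX : psub X.
  split.
  - by exists 0; rewrite linear0.
  - by move=> x y [a ->] [b ->]; exists (a + b); rewrite linearD.
  - by move=> x r [a ->]; exists (ract a r); rewrite linZ.
have [H [p [pH XH eH pIm pid]]] := core (@Ity_injective _ _ M) pX.
have Hs := toP_sub pH.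
have iP m : jlin M m \in toP H by apply/inP; apply: XH; exists m.
pose ifun m : subT Hs := Subm (iP m).
have iL : linS ifun.
  split.
  - by move=> x y; apply: subm_ext; exact: (linearD (jlin M)).
  - by move=> x r; apply: subm_ext; exact: (linZ (jlin M)).
exists (subT Hs), (mkl iL); split.
- move=> A B f g finj.
  have gL : linS (fun a => sv (g a)).
    by split => [x y|x r]; rewrite ?linearD ?linZ.
  have [h hE] := @Ity_injective _ _ M A B f (mkl gL) finj.
  have hP b : p (h b) \in toP H by apply/inP.
  pose h' b : subT Hs := Subm (hP b).
  have h'L : linS h'.
    split => [x y|x r]; apply: subm_ext.
      by rewrite [sv (h' (x + y))]/= !linearD.
    by rewrite [sv (h' (ract x r))]/= !linZ.
  exists (mkl h'L) => a; apply: subm_ext => /=.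
  rewrite hE /=; apply: pid; apply/inP; exact: svP.
- split.
  + move=> x y /(congr1 (@sv _ _ _)) /=; exact: jlin_inj.
  + move=> S HS [x xS x0].
    have Hx : H (sv x) by apply/inP; exact: svP.
    have x0' : sv x != 0.
      apply: contra x0 => /eqP e; apply/eqP; exact: subm_ext.
    have [r [[m em] r0]] := eH _ Hx x0'.
    have e : mkl iL m = ract x r by apply: subm_ext; exact: (esym em).
    exists m; rewrite e; split; first by case: HS => _ _ HZ; apply: HZ.
    apply: contra r0 => /eqP e0; by rewrite -[ract (sv x) r]/(sv (ract x r)) e0.
Qed.

Lemma inj_bij (E : rmodType R) (Einj : injective_module E) (Eind : indecomposable E)
  (f : {linear E -> E}) : injective f -> bijective f.
Proof.
move=> finj.
have idL : linS (fun x : E => x) by [].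
have [r rf] := Einj E E f (mkl idL) finj.
have rf' : forall a, r (f a) = a := rf.
pose Im := fun y => exists x, y = f x.
pose Kr := fun y => r y = 0.
have pIm : psub Im.
  split.
  - by exists 0; rewrite linear0.
  - by move=> x y [a ->] [b ->]; exists (a + b); rewrite linearD.
  - by move=> x s [a ->]; exists (ract a s); rewrite linZ.
have pKr : psub Kr.
  split.
  - by rewrite /Kr linear0.
  - by move=> x y; rewrite /Kr linearD => -> ->; rewrite addr0.
  - by move=> x s; rewrite /Kr linZ => ->; rewrite ract0.
case: Eind => [[e0 e00] Eind].
case: (Eind _ _ (toP_sub pIm) (toP_sub pKr)).
- move=> x /inP [x' ->] /inP Kx.
  have : x' = 0 by rewrite -(rf' x'); apply: Kx.
  by move=> ->; rewrite linear0.
- move=> x; exists (f (r x)), (x - f (r x)); split.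
  + by apply/inP; exists (r x).
  + apply/inP; rewrite /Kr linearB.
    by rewrite rf'; rewrite subrr.
  + by rewrite addrC subrK.
- move=> H0; exfalso; move/negP: e00; apply.
  have : f e0 = 0 by apply: H0; apply/inP; exists e0.
  by move=> h; apply/eqP; apply: finj; rewrite h linear0.
- move=> H0; exists r => [x|y]; first exact: rf'.
  have : y - f (r y) = 0.
    apply: H0; apply/inP; rewrite /Kr linearB.
    by rewrite rf'; rewrite subrr.
  by move/eqP; rewrite subr_eq0 => /eqP <-.
Qed.

Lemma uniform (E : rmodType R) (Einj : injective_module E) (Eind : indecomposable E)
  (A B : set E) : psub A -> psub B -> (exists a, A a /\ a != 0) ->
  (exists b, B b /\ b != 0) -> exists z, [/\ A z, B z & z != 0].
Proof.
move=> pA pB [a [Aa a0]] [b [Bb b0]].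
have [H [p [pH AH eH pIm pid]]] := core Einj pA.
pose Kp := fun y => p y = 0.
have pKp : psub Kp.
  split.
  - by rewrite /Kp linear0.
  - by move=> x y; rewrite /Kp linearD => -> ->; rewrite addr0.
  - by move=> x s; rewrite /Kp linZ => ->; rewrite ract0.
case: Eind => _ Eind.
case: (Eind _ _ (toP_sub pH) (toP_sub pKp)).
- by move=> x /inP Hx /inP Kx; rewrite -(pid _ Hx).
- move=> x; exists (p x), (x - p x); split.
  + by apply/inP.
  + by apply/inP; rewrite /Kp linearB (pid _ (pIm _)) subrr.
  + by rewrite addrC subrK.
- move=> H0; exfalso; move/negP: a0; apply; apply/eqP; apply: H0.
  by apply/inP; apply: AH.
- move=> H0.
  have Hb : H b.
    have : b - p b = 0 by apply: H0; apply/inP; rewrite /Kp linearB (pid _ (pIm _)) subrr.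
    by move/eqP; rewrite subr_eq0 => /eqP ->.
  have [r [Ar r0]] := eH _ Hb b0.
  exists (ract b r); split => //.
  by case: pB => _ _ HZ; apply: HZ.
Qed.
End Hull.

Section Mn.
Variables (F : fieldType) (R : algType F).

Lemma qi_of_inv (M E : rmodType R) (i : {linear M -> E}) : injective_hull i ->
  (forall tau : {linear E -> E}, forall m, exists m', tau (i m) = i m') ->
  quasi_injective M.
Proof.
move=> [Einj [iinj _]] inv S f HS [fD fZ].
pose g0 (s : subT HS) := i (f (sv s)).
have g0L : linS g0.
  split => [s t|s r]; rewrite /g0.
  - by rewrite -linearD -fD //; exact: svP.
  - by rewrite -linZ -fZ //; exact: svP.
have [h hE] := Einj _ _ (sincl HS) (mkl g0L) (@sincl_inj _ _ _ HS).
have [tau tE] := Einj _ _ i h iinj.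
pose gf m := projT1 (cid (inv tau m)).
have gfE m : tau (i m) = i (gf m) := projT2 (cid (inv tau m)).
have gL : linS gf.
  split => [x y|x r]; apply: iinj.
  - by rewrite -gfE !linearD !gfE.
  - by rewrite -gfE !linZ !gfE.
exists (mkl gL) => x xS.
apply: iinj; rewrite [mkl gL x]/= -gfE tE.
by have := hE (Subm xS).
Qed.

Lemma ai_of_qi (M : rmodType R) : quasi_injective M -> automorphism_invariant M.
Proof.
move=> qi E i [Einj [iinj iess]] sigma _.
pose K := fun x => exists m', sigma (i x) = i m'.
have pK : psub K.
  split.
  - by exists 0; rewrite !linear0.
  - by move=> x y [a ea] [b eb]; exists (a + b); rewrite !linearD ea eb.
  - by move=> x r [a ea]; exists (ract a r); rewrite !linZ ea.
pose fK x := match pselect (K x) with left e => projT1 (cid e) | right _ => 0 end.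
have fKE x : K x -> sigma (i x) = i (fK x).
  by move=> Kx; rewrite /fK; case: pselect => // e; case: (cid e).
have hom : hom_on (toP K) fK.
  split.
  - move=> x y /inP Kx /inP Ky; apply: iinj.
    have Kxy : K (x + y) by case: pK => _ HD _; apply: HD.
    by rewrite -fKE // linearD !linearD fKE // fKE.
  - move=> x r /inP Kx; apply: iinj.
    have Kxr : K (ract x r) by case: pK => _ _ HZ; apply: HZ.
    by rewrite -fKE // !linZ fKE.
have [g gE] := qi _ fK (toP_sub pK) hom.
suff all m : sigma (i m) = i (g m) by move=> m; exists (g m).
apply/eqP; rewrite -subr_eq0; apply/negP => /negP y0.
set y := _ - _ in y0.
pose yR := fun z => exists r, z = ract y r.
have pyR : psub yR.
  split.
  - by exists 0; rewrite ractr0.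
  - by move=> a b [r ->] [s ->]; exists (r + s); rewrite ractDr.
  - by move=> a s [r ->]; exists (r * s); rewrite ractA.
have [|m0 [/inP [r er] m00]] := iess _ (toP_sub pyR).
  by exists y => //; apply/inP; exists 1; rewrite ract1.
have Kmr : K (ract m r).
  exists (m0 + g (ract m r)).
  by rewrite linearD er /y ractB -!linZ subrK.
have := gE _ (iffRL (inP _ _) Kmr) => e.
move/negP: m00; apply; apply/eqP.
by rewrite er /y ractB -!linZ fKE // e subrr.
Qed.

Lemma E_indec (c : F) (c0 : c != 0) (c1 : c != 1) (M E : rmodType R)
  (i : {linear M -> E}) : injective_hull i -> indecomposable M ->
  automorphism_invariant M -> indecomposable E.
Proof.
move=> hull [[x x0] Mind] ai.
case: (hull) => Einj [iinj iess].
split.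
  exists (i x); apply: contra x0 => /eqP e; apply/eqP; apply: iinj.
  by rewrite e linear0.
move=> A B HA HB AB span.
have decP y : exists ab : E * E, [/\ ab.1 \in A, ab.2 \in B & y = ab.1 + ab.2].
  by have [a [b [Aa Bb e]]] := span y; exists (a, b).
pose pa y := (projT1 (cid (decP y))).1.
pose pb y := (projT1 (cid (decP y))).2.
have pdec y : [/\ pa y \in A, pb y \in B & y = pa y + pb y].
  by rewrite /pa /pb; case: (cid (decP y)) => [[a b]].
have uniq a b a' b' : a \in A -> b \in B -> a' \in A -> b' \in B -> a + b = a' + b' ->
    a = a' /\ b = b'.
  move=> Aa Bb Aa' Bb' e.
  have e' : a - a' = b' - b.
    by apply: (addIr (a' + b)); rewrite addrA addrNK [a' + b]addrC addrA addrNK e addrC.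
  have z : a - a' = 0.
    apply: AB; first exact: (HSD HA Aa (HSN HA Aa')).
    by rewrite e'; exact: (HSD HB Bb' (HSN HB Bb)).
  split; first by apply/eqP; rewrite -subr_eq0 z.
  by apply/eqP; rewrite eq_sym -subr_eq0 -e' z.
have pE a b : a \in A -> b \in B -> pa (a + b) = a /\ pb (a + b) = b.
  move=> Aa Bb; case: (pdec (a + b)) => Ap Bp e.
  by have [-> ->] := uniq _ _ _ _ Ap Bp Aa Bb (esym e).
have paL : linS pa /\ linS pb.
  split; split.
  - move=> y z; case: (pdec y) => Ay By ey; case: (pdec z) => Az Bz ez.
    rewrite {1}ey {1}ez addrACA.
    by case: (pE _ _ (HSD HA Ay Az) (HSD HB By Bz)).
  - move=> y r; case: (pdec y) => Ay By ey.
    rewrite {1}ey ractDl.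
    by case: (pE _ _ (HSZ HA r Ay) (HSZ HB r By)).
  - move=> y z; case: (pdec y) => Ay By ey; case: (pdec z) => Az Bz ez.
    rewrite {1}ey {1}ez addrACA.
    by case: (pE _ _ (HSD HA Ay Az) (HSD HB By Bz)).
  - move=> y r; case: (pdec y) => Ay By ey.
    rewrite {1}ey ractDl.
    by case: (pE _ _ (HSZ HA r Ay) (HSZ HB r By)).
case: paL => [[paD paZ] [pbD pbZ]].
pose sg y := pa y + ract (pb y) c%:A.
pose tg y := pa y + ract (pb y) (c^-1)%:A.
have sgL : linS sg.
  split => [y z|y r]; rewrite /sg.
  - by rewrite paD pbD ractDl addrACA.
  - by rewrite paZ pbZ ractDl ract_comm.
have sgE y : pa (sg y) = pa y /\ pb (sg y) = ract (pb y) c%:A.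
  by case: (pdec y) => Ay By _; apply: pE => //; apply: HSZ.
have tgE y : pa (tg y) = pa y /\ pb (tg y) = ract (pb y) (c^-1)%:A.
  by case: (pdec y) => Ay By _; apply: pE => //; apply: HSZ.
have bij : bijective (mkl sgL).
  exists tg => y.
  - change (tg (sg y) = y); rewrite {1}/tg; case: (sgE y) => -> ->; rewrite ractA -algM mulfV // alg1 ract1.
    by case: (pdec y).
  - change (sg (tg y) = y); rewrite {1}/sg; case: (tgE y) => -> ->; rewrite ractA -algM mulVf // alg1 ract1.
    by case: (pdec y).
have c10 : c - 1 != 0 by rewrite subr_eq0.
have pbM m : exists mb, pb (i m) = i mb.
  have [m' em'] := ai E i hull _ bij m.
  exists (ract (m' - m) ((c - 1)^-1)%:A).
  rewrite linZ linearB -em' [mkl sgL _]/= /sg.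
  case: (pdec (i m)) => _ _ ey.
  set a := pa (i m) in ey *; set b := pb (i m) in ey *.
  rewrite [X in _ - X]ey.
  have -> : a + ract b c%:A - (a + b) = ract b (c - 1)%:A.
    rewrite [(c - 1)%:A]scalerBl scale1r ractBr ract1 opprD addrACA subrr add0r.
    done.
  by rewrite ractA -algM mulfV // alg1 ract1.
pose A' : pred M := fun m => i m \in A.
pose B' : pred M := fun m => i m \in B.
have HA' : is_submodule A'.
  split.
  - by rewrite /A' unfold_in /= linear0 (HS0 HA).
  - move=> a b; rewrite /A' !unfold_in /= linearD; exact: HSD.
  - move=> a r; rewrite /A' !unfold_in /= linZ; exact: HSZ.
have HB' : is_submodule B'.
  split.
  - by rewrite /B' unfold_in /= linear0 (HS0 HB).
  - move=> a b; rewrite /B' !unfold_in /= linearD; exact: HSD.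
  - move=> a r; rewrite /B' !unfold_in /= linZ; exact: HSZ.
have AB' : forall m, m \in A' -> m \in B' -> m = 0.
  move=> m; rewrite /A' /B' !unfold_in /= => Am Bm.
  by apply: iinj; rewrite linear0; apply: AB.
have span' : forall m, exists a b, [/\ a \in A', b \in B' & m = a + b].
  move=> m; have [mb emb] := pbM m.
  exists (m - mb), mb; split; last by rewrite subrK.
  - rewrite /A' unfold_in /= linearB -emb.
    case: (pdec (i m)) => Ap _ ey; by rewrite {1}ey addrK.
  - by rewrite /B' unfold_in /= -emb; case: (pdec (i m)).
have fromM (S : pred E) (HS' : is_submodule S) :
    (forall m, i m \in S -> m = 0) -> forall y, y \in S -> y = 0.
  move=> H0 y yS; apply/eqP; apply: contrapT => /negP y0.
  have [m [mS m0]] := iess S HS' (ex_intro2 _ _ y yS y0).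
  by move/negP: m0; apply; rewrite (H0 m mS) linear0.
case: (Mind A' B' HA' HB' AB' span') => H0; [left|right]; apply: fromM => //.
Qed.
End Mn.

Lemma swap_sub (V : zmodType) (a b c d : V) : a - c = b - d -> a - b = c - d.
Proof.
move=> e; apply/eqP; rewrite -subr_eq0 opprB.
have : (a - c) - (b - d) = 0 by rewrite e subrr.
rewrite opprB => <-; apply/eqP.
by rewrite !addrA (addrAC a (-b)) (addrAC a (-c)) [RHS]addrAC.
Qed.

Theorem corollary6 (F : fieldType) (R : algType F)
  (hF : exists a b c : F, [/\ a != b, a != c & b != c]) :
  right_invariant_module_type R <->
  (forall M : rmodType R, indecomposable M -> automorphism_invariant M).
Proof.
have [c [c0 c1]] : exists c : F, c != 0 /\ c != 1.
  case: hF => a [b [d [ab ad bd]]].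
  have [a0|a0] := eqVneq a 0.
    subst a; have [b1|b1] := eqVneq b 1.
      subst b; exists d; split; first by rewrite eq_sym.
      by rewrite eq_sym.
    by exists b; split => //; rewrite eq_sym.
  have [a1|a1] := eqVneq a 1; last by exists a.
  subst a; have [b0|b0] := eqVneq b 0.
    subst b; exists d; split; first by rewrite eq_sym.
    by rewrite eq_sym.
  by exists b; split => //; rewrite eq_sym.
split.
- move=> H M Mi; apply: ai_of_qi; exact: H.
- move=> AI M Mi.
  have [E [i hull]] := hull_exists M.
  have Eind := E_indec c0 c1 hull Mi (AI M Mi).
  case: (hull) => Einj [iinj iess].
  apply: (qi_of_inv hull) => tau m.
  have [tinj|ntinj] := pselect (injective tau).
    exact: (AI M Mi E i hull tau (inj_bij Einj Eind tinj) m).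
  have [z [tz z0]] : exists z, tau z = 0 /\ z != 0.
    apply: contrapT => nz; apply: ntinj => x y exy.
    apply/eqP; rewrite -subr_eq0; apply/negP => /negP xy0; apply: nz.
    by exists (x - y); split => //; rewrite linearB exy subrr.
  pose sg v := tau v - v.
  have sgL : linS sg.
    split => [u v|u r]; rewrite /sg.
    - by rewrite linearD opprD addrACA.
    - by rewrite linZ ractB.
  have sginj : injective (mkl sgL).
    move=> u v e; apply/eqP; rewrite -subr_eq0; apply/negP => /negP w0.
    have e' : tau u - u = tau v - v := e.
    have tw : tau (u - v) = u - v by rewrite linearB; apply: swap_sub.
    have pA : psub (fun x : E => tau x = 0).
      split.
      - by rewrite linear0.
      - by move=> x y; rewrite linearD => -> ->; rewrite addr0.
      - by move=> x r; rewrite linZ => ->; rewrite ract0.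
    have pB : psub (fun x : E => tau x = x).
      split.
      - by rewrite linear0.
      - by move=> x y; rewrite linearD => -> ->.
      - by move=> x r; rewrite linZ => ->.
    have [q [qA qB q0]] := uniform Einj Eind pA pB (ex_intro _ z (conj tz z0))
      (ex_intro _ (u - v) (conj tw w0)).
    by move/negP: q0; apply; rewrite -qB qA.
  have [m1 e1] := AI M Mi E i hull _ (inj_bij Einj Eind sginj) m.
  exists (m1 + m); rewrite linearD -e1.
  by rewrite [mkl sgL _]/= /sg subrK.
Qed.
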